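(* Let $n\in\mathbb{N}$ and $\hbar\in{]0,\infty[}$. The map $\Theta_\hbar:\mathscr{P}(\mathbb{C}^{1+n})\to\mathscr{P}(\mathbb{C}^{1+n})$, $$\Theta_\hbar(f)=\Big(\exp\Big(-\hbar\sum_{j=0}^n\frac{\partial^2}{\partial z_j\partial\overline{z_j}}\Big)f\Big)\circ\overline{\,\cdot\,},$$ where $\overline{\,\cdot\,}:\mathbb{C}^{1+n}\to\mathbb{C}^{1+n}$ is componentwise complex conjugation, is a linear bijection satisfying $\Theta_\hbar(f\star_\hbar g)=\Theta_\hbar(f)\star_{-\hbar}\Theta_\hbar(g)$ and $\Theta_\hbar(\overline{f})=\overline{\Theta_\hbar(f)}$ for all $f,g\in\mathscr{P}(\mathbb{C}^{1+n})$; i.e. it is a $^*$-isomorphism from $(\mathscr{P}(\mathbb{C}^{1+n}),\star_\hbar)$ to $(\mathscr{P}(\mathbb{C}^{1+n}),\star_{-\hbar})$.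
   Context: $\mathscr{P}(\mathbb{C}^{1+n})$ is the space of complex polynomials in $z_0,\dots,z_n,\overline{z_0},\dots,\overline{z_n}$. For $\hbar\in\mathbb{R}$, the Wick product is $f\star_\hbar g=\sum_{K\in\mathbb{N}_0^{1+n}}\frac{\hbar^{|K|}}{K!}\frac{\partial^{|K|}f}{\partial\overline{z}^K}\frac{\partial^{|K|}g}{\partial z^K}$, with involution pointwise complex conjugation. *)

(* Defs.v *)
From HB Require Import structures.
From mathcomp Require Import all_boot all_order all_algebra.
From mathcomp Require Import mpoly.
From mathcomp Require Import complex.

Set Implicit Arguments.
Unset Strict Implicit.
Unset Printing Implicit Defensive.

Import Order.TTheory GRing.Theory Num.Theory.
Local Open Scope ring_scope.
Local Open Scope complex_scope.

(* The complex numbers are modelled as R[i] = complex R for an arbitrary real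
   closed field R (R[i] is the usual C when R is the field of real numbers).
   P(C^{1+n}) is modelled as the polynomial algebra in the 2(n+1) variables
   z_0..z_n (indices lshift j) and zbar_0..zbar_n (indices rshift j). *)

Section Wick.
Variables (R : rcfType) (n : nat).

Definition Cpoly := {mpoly R[i][n.+1 + n.+1]}.

Definition zi (j : 'I_n.+1) : 'I_(n.+1 + n.+1) := lshift n.+1 j.
Definition zbi (j : 'I_n.+1) : 'I_(n.+1 + n.+1) := rshift n.+1 j.

Definition dZ (K : 'X_{1..n.+1}) (f : Cpoly) : Cpoly :=
  foldr (fun j => iter (K j) (mderiv (zi j))) f (enum 'I_n.+1).
Definition dZb (K : 'X_{1..n.+1}) (f : Cpoly) : Cpoly :=
  foldr (fun j => iter (K j) (mderiv (zbi j))) f (enum 'I_n.+1).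

Definition mfact (K : 'X_{1..n.+1}) : nat := \prod_(j < n.+1) (K j)`!.

(* Only K with |K| < msize f can contribute (higher derivatives of f vanish),
   so the sum is taken over the finite type of such multi-indices. *)
Definition wick (h : R) (f g : Cpoly) : Cpoly :=
  \sum_(K : 'X_{1..n.+1 < (msize f).+1})
     ((h ^+ mdeg K / (mfact K)%:R)%:C) *: (dZb K f * dZ K g).

(* pointwise complex conjugation: conjugate the coefficients and exchange
   z_j <-> zbar_j *)
Definition swapvar (i : 'I_(n.+1 + n.+1)) : Cpoly :=
  match split i with inl j => 'X_(zbi j) | inr j => 'X_(zi j) end.

(* f o conj, conj : C^{1+n} -> C^{1+n} componentwise conjugation:
   exchanges z_j and zbar_j without conjugating coefficients *)
Definition comp_conj (f : Cpoly) : Cpoly := mmap (@mpolyC _ _) swapvar f.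

Definition conjP (f : Cpoly) : Cpoly := map_mpoly conjc (comp_conj f).

Definition Lap (f : Cpoly) : Cpoly :=
  \sum_(j < n.+1) mderiv (zi j) (mderiv (zbi j) f).

(* exp(-h Lap) f ; Lap lowers the degree, so iterates of order > msize f vanish *)
Definition expLap (h : R) (f : Cpoly) : Cpoly :=
  \sum_(k < (msize f).+1) (((- h) ^+ k / (k`!)%:R)%:C) *: iter k Lap f.

Definition Theta (h : R) (f : Cpoly) : Cpoly := comp_conj (expLap h f).

End Wick.

(* Main.v *)
Require Import Defs.
From HB Require Import structures.
From mathcomp Require Import all_boot all_order all_algebra.
From mathcomp Require Import mpoly.
From mathcomp Require Import complex.
From mathcomp Require Import zify ring lra.
Import Order.TTheory GRing.Theory Num.Theory.
Local Open Scope ring_scope.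

Set Implicit Arguments.
Unset Strict Implicit.
Unset Printing Implicit Defensive.

Section Proofs.
Variables (R : rcfType) (n : nat).
Local Notation N := (n.+1 + n.+1)%N.
Local Notation P := (Cpoly R n).
Local Notation C := (complex R).
Local Open Scope complex_scope.
Local Open Scope ring_scope.
Implicit Types (p q f g : P).

Definition sw (i : 'I_N) : 'I_N :=
  match split i with inl j => zbi j | inr j => zi j end.

Lemma sw_zi (j : 'I_n.+1) : sw (zi j) = zbi j.
Proof. by rewrite /sw /zi (unsplitK (inl j : 'I_n.+1 + 'I_n.+1)). Qed.
Lemma sw_zbi (j : 'I_n.+1) : sw (zbi j) = zi j.
Proof. by rewrite /sw /zbi (unsplitK (inr j : 'I_n.+1 + 'I_n.+1)). Qed.

Lemma idx_case (i : 'I_N) : (exists j, i = zi j) \/ (exists j, i = zbi j).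
Proof.
by case: (splitP i) => j Hj; [left|right]; exists j; apply: val_inj; rewrite /= Hj.
Qed.

Lemma swK : involutive sw.
Proof. move=> i; case: (idx_case i) => [[j ->]|[j ->]].
- by rewrite sw_zi sw_zbi.
- by rewrite sw_zbi sw_zi. Qed.

Lemma zi_zbi (j k : 'I_n.+1) : (zi j == zbi k) = false.
Proof.
apply/negbTE/eqP=> /(congr1 val) /=; move: (ltn_ord j) => /[swap] ->.
by rewrite ltnNge leq_addr.
Qed.
Lemma zi_inj : injective (@zi n).
Proof. by move=> j k /(congr1 val) /= /val_inj. Qed.
Lemma zbi_inj : injective (@zbi n).
Proof. by move=> j k /(congr1 val) /= /addnI /val_inj. Qed.

Lemma poly_ind (Q : P -> Prop) :
  Q 0 -> Q 1 -> (forall p q, Q p -> Q q -> Q (p + q)) ->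
  (forall c p, Q p -> Q (c *: p)) ->
  (forall i p, Q p -> Q ('X_i * p)) -> forall p, Q p.
Proof.
move=> Q0 Q1 QD QZ QX; elim/mpolyind => // c m p _ _ Qp; apply: QD => //.
apply: QZ; rewrite mpolyXE_id.
elim: (index_enum _) => [|a s IH]; first by rewrite big_nil.
rewrite big_cons; elim: (m a) => [|k IHk]; first by rewrite expr0 mul1r.
by rewrite exprS -mulrA; apply: QX.
Qed.


Local Notation D := (@mderiv N C).

Lemma DX i k : D i ('X_k : P) = (k == i)%:R.
Proof.
rewrite mderivX mnm1E; case: eqP => [->|_]; last by rewrite scale0r.
have -> : (U_(i) - U_(i))%MM = 0%MM by apply/mnmP=> l; rewrite mnmBE mnm0E subnn.
by rewrite mpolyX0 scale1r.
Qed.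

Lemma D1 i : D i (1 : P) = 0.
Proof. by rewrite -mpolyC1 mderivC. Qed.

Lemma DXM i k p : D i ('X_k * p) = 'X_k * D i p + (k == i)%:R *: p.
Proof. by rewrite mderivM DX mulr_natl scaler_nat; apply: addrC. Qed.

Definition cc (p : P) : P := comp_conj p.

Lemma ccD p q : cc (p + q) = cc p + cc q.
Proof. exact: mmapD. Qed.
Lemma ccZ (c : C) p : cc (c *: p) = c *: cc p.
Proof. by rewrite /cc /comp_conj mmapZ mul_mpolyC. Qed.
Lemma cc0 : cc 0 = 0.
Proof. exact: mmap0. Qed.
Lemma ccM p q : cc (p * q) = cc p * cc q.
Proof. by rewrite /cc /comp_conj rmorphM. Qed.
Lemma cc1 : cc 1 = 1.
Proof. by rewrite /cc /comp_conj -mpolyC1 mmapC. Qed.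
Lemma ccX i : cc 'X_i = 'X_(sw i).
Proof.
rewrite /cc /comp_conj mmapX mmap1U /swapvar /sw.
by case: (split i).
Qed.
Lemma ccB p q : cc (p - q) = cc p - cc q.
Proof. exact: mmapB. Qed.

Lemma cc_D i p : cc (D i p) = D (sw i) (cc p).
Proof.
elim/poly_ind: p i => [i|i|p q Hp Hq i|c p Hp i|k p Hp i].
- by rewrite mderiv0 cc0 mderiv0.
- by rewrite D1 cc1 D1 cc0.
- by rewrite !mderivD !ccD !mderivD Hp Hq.
- by rewrite (mderivZ i c p) ccZ Hp ccZ mderivZ.
by rewrite DXM ccD ccM ccX Hp ccZ ccM ccX DXM (inj_eq (can_inj swK)).
Qed.

Lemma ccK : involutive cc.
Proof.
elim/poly_ind => [|||c p Hp|k p Hp].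
- by rewrite !cc0.
- by rewrite !cc1.
- by move=> p q Hp Hq; rewrite (ccD p q) (ccD (cc p) (cc q)); congr (_ + _).
- by rewrite !ccZ Hp.
by rewrite !ccM !ccX swK Hp.
Qed.

Definition Bd (k : nat) (p : P) := forall m : 'X_{1..N}, (k <= mdeg m)%N -> p@_m = 0.

Lemma Bd_msize p : Bd (msize p) p.
Proof. by move=> m /msize_mdeg_ge /memN_msupp_eq0. Qed.

Lemma Bd0 p : Bd 0 p -> p = 0.
Proof. by move=> H; apply/mpolyP=> m; rewrite H // mcoeff0. Qed.

Lemma Bd_le k k' p : (k <= k')%N -> Bd k p -> Bd k' p.
Proof. by move=> le H m Hm; apply: H; apply: leq_trans Hm. Qed.

Lemma BdD k p q : Bd k p -> Bd k q -> Bd k (p + q).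
Proof. by move=> Hp Hq m Hm; rewrite mcoeffD Hp ?Hq ?addr0. Qed.

Lemma BdZ k c p : Bd k p -> Bd k (c *: p).
Proof. by move=> Hp m Hm; rewrite mcoeffZ Hp ?mulr0. Qed.

Lemma Bd_D k i p : Bd k p -> Bd k.-1 (D i p).
Proof.
move=> Hp m Hm; rewrite mcoeff_deriv Hp ?mul0rn //.
by rewrite mdegD mdeg1 addn1; case: k Hm {Hp}.
Qed.

Lemma Bd_foldr k s p : Bd k p -> Bd (k - size s) (foldr D p s).
Proof.
elim: s => [|a s IH] Hp /=; first by rewrite subn0.
apply: Bd_le (Bd_D _ (IH Hp)); by rewrite subnS.
Qed.

Lemma foldr_iter (I : Type) (r : seq I) (c : I -> nat) (v : I -> 'I_N) p :
  foldr (fun j => iter (c j) (D (v j))) p r =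
  foldr D p (flatten [seq nseq (c j) (v j) | j <- r]).
Proof.
elim: r => //= j r IH; rewrite foldr_cat -IH.
by elim: (c j) => //= k ->.
Qed.

Definition sq (m : 'X_{1..N}) := flatten [seq nseq (m i) i | i <- enum 'I_N].

Lemma count_sq (a : pred 'I_N) m : count a (sq m) = (\sum_i a i * m i)%N.
Proof.
rewrite /sq count_flatten sumnE !big_map -enumT big_enum /=.
by apply: eq_bigr => i _; rewrite count_nseq.
Qed.

Lemma size_sq m : size (sq m) = mdeg m.
Proof.
rewrite -(count_predT (sq m)) count_sq mdegE.
by apply: eq_bigr => i _; rewrite mul1n.
Qed.

Lemma mderivm_sq m p : mderivm m p = foldr D p (sq m).
Proof. exact: mderivm_foldr. Qed.

Lemma Bd_mderivm k m p : Bd k p -> Bd (k - mdeg m) (mderivm m p).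
Proof. by move=> H; rewrite mderivm_sq -size_sq; apply: Bd_foldr. Qed.

Lemma mderivm_D m i p : mderivm m (D i p) = D i (mderivm m p).
Proof. by rewrite -mderivmU1m -mderivmDm addmC mderivmDm mderivmU1m. Qed.

Lemma mderivmM m i p : mderivm (m + U_(i)) p = mderivm m (D i p).
Proof. by rewrite mderivmDm mderivmU1m mderivm_D. Qed.

Lemma D_sum i (I : Type) (r : seq I) (F : I -> P) :
  D i (\sum_(k <- r) F k) = \sum_(k <- r) D i (F k).
Proof.
elim: r => [|x r IH]; first by rewrite !big_nil mderiv0.
by rewrite !big_cons mderivD IH.
Qed.

Lemma FL a s p : foldr D ('X_a * p) s =
  'X_a * foldr D p s + (count_mem a s)%:R *: foldr D p (rem a s).
Proof.
elim: s => [|b s IH] /=; first by rewrite scale0r addr0.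
rewrite IH mderivD DXM mderivZ.
case: (eqVneq b a) => [->|nba] /=.
- rewrite /= ?eqxx /= ?add1n.
  have [ain|anin] := boolP (a \in s).
    have E : foldr D p (a :: rem a s) = foldr D p s.
      by apply/mderiv_perm; rewrite perm_sym perm_to_rem.
    rewrite /= in E; by rewrite E !scaler_nat -addrA -mulrnDr add1n.
  have -> : count_mem a s = 0%N by apply/eqP; rewrite -leqn0 leqNgt -has_count has_pred1.
  by rewrite !scale0r !addr0 scale1r.
- by rewrite scale0r addr0 add0n.
Qed.

Lemma count_mem_sq a m : count_mem a (sq m) = m a.
Proof.
rewrite count_sq (bigD1 a) //= eqxx mul1n big1 ?addn0 //.
by move=> i /negbTE; rewrite eq_sym => ->.
Qed.

Lemma LeibX a m p : mderivm m ('X_a * p) =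
  'X_a * mderivm m p + (m a)%:R *: mderivm (m - U_(a)) p.
Proof.
rewrite !mderivm_sq FL count_mem_sq; congr (_ + _).
have [->|ma0] := eqVneq (m a) 0%N; first by rewrite !scale0r.
congr (_ *: _); apply/mderiv_perm/permP => P0.
have ain : a \in sq m by rewrite -has_pred1 has_count count_mem_sq lt0n.
have := permP (perm_to_rem ain) P0; rewrite /= => E.
apply/eqP; rewrite -(eqn_add2l (P0 a)) -E !count_sq (bigD1 a) //= [X in _ == (_ + X)%N](bigD1 a) //=.
rewrite mnmBE mnm1E eqxx [X in _ == (_ + (_ + X))%N](eq_bigr (fun i => P0 i * m i)%N); last first.
  by move=> i nia; rewrite mnmBE mnm1E eq_sym (negbTE nia) subn0.
by move: ma0; case: (m a) => // k _; rewrite subn1 /= mulnS addnA.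
Qed.

Local Notation XN := ('X_{1..n.+1}).

Definition Kz (K : XN) : 'X_{1..N} :=
  [multinom (match split i with inl j => K j | inr _ => 0%N end) | i < N].
Definition Kb (K : XN) : 'X_{1..N} :=
  [multinom (match split i with inl _ => 0%N | inr j => K j end) | i < N].

Lemma Kz_zi K j : Kz K (zi j) = K j.
Proof. by rewrite /Kz mnmE /zi (unsplitK (inl j : 'I_n.+1 + 'I_n.+1)). Qed.
Lemma Kz_zbi K j : Kz K (zbi j) = 0%N.
Proof. by rewrite /Kz mnmE /zbi (unsplitK (inr j : 'I_n.+1 + 'I_n.+1)). Qed.
Lemma Kb_zi K j : Kb K (zi j) = 0%N.
Proof. by rewrite /Kb mnmE /zi (unsplitK (inl j : 'I_n.+1 + 'I_n.+1)). Qed.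
Lemma Kb_zbi K j : Kb K (zbi j) = K j.
Proof. by rewrite /Kb mnmE /zbi (unsplitK (inr j : 'I_n.+1 + 'I_n.+1)). Qed.

Lemma U_zi_zi (j k : 'I_n.+1) : U_(zi j)%MM (zi k) = U_(j)%MM k.
Proof. by rewrite !mnm1E (inj_eq zi_inj). Qed.
Lemma U_zbi_zbi (j k : 'I_n.+1) : U_(zbi j)%MM (zbi k) = U_(j)%MM k.
Proof. by rewrite !mnm1E (inj_eq zbi_inj). Qed.
Lemma U_zi_zbi (j k : 'I_n.+1) : U_(zi j)%MM (zbi k) = 0%N.
Proof. by rewrite !mnm1E zi_zbi. Qed.
Lemma U_zbi_zi (j k : 'I_n.+1) : U_(zbi j)%MM (zi k) = 0%N.
Proof. by rewrite !mnm1E eq_sym zi_zbi. Qed.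

Lemma KzD K1 K2 : Kz (K1 + K2) = (Kz K1 + Kz K2)%MM.
Proof.
apply/mnmP => i; case: (idx_case i) => [[j ->]|[j ->]];
  by rewrite !(mnmDE, Kz_zi, Kz_zbi).
Qed.
Lemma KbD K1 K2 : Kb (K1 + K2) = (Kb K1 + Kb K2)%MM.
Proof.
apply/mnmP => i; case: (idx_case i) => [[j ->]|[j ->]];
  by rewrite !(mnmDE, Kb_zi, Kb_zbi).
Qed.
Lemma KzB K1 K2 : Kz (K1 - K2) = (Kz K1 - Kz K2)%MM.
Proof.
apply/mnmP => i; case: (idx_case i) => [[j ->]|[j ->]];
  by rewrite !(mnmBE, Kz_zi, Kz_zbi).
Qed.
Lemma KbB K1 K2 : Kb (K1 - K2) = (Kb K1 - Kb K2)%MM.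
Proof.
apply/mnmP => i; case: (idx_case i) => [[j ->]|[j ->]];
  by rewrite !(mnmBE, Kb_zi, Kb_zbi).
Qed.
Lemma KzU j : Kz U_(j) = U_(zi j)%MM.
Proof.
apply/mnmP => i; case: (idx_case i) => [[k ->]|[k ->]];
  by rewrite ?(Kz_zi, Kz_zbi, U_zi_zi, U_zi_zbi).
Qed.
Lemma KbU j : Kb U_(j) = U_(zbi j)%MM.
Proof.
apply/mnmP => i; case: (idx_case i) => [[k ->]|[k ->]];
  by rewrite ?(Kb_zi, Kb_zbi, U_zbi_zbi, U_zbi_zi).
Qed.

Lemma mdeg_Kz K : mdeg (Kz K) = mdeg K.
Proof.
rewrite !mdegE big_split_ord /= [X in (_ + X)%N]big1 ?addn0; last by move=> j _; exact: Kz_zbi.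
by apply: eq_bigr => j _; exact: Kz_zi.
Qed.
Lemma mdeg_Kb K : mdeg (Kb K) = mdeg K.
Proof.
rewrite !mdegE big_split_ord /= [X in (X + _)%N]big1 ?add0n; last by move=> j _; exact: Kb_zi.
by apply: eq_bigr => j _; exact: Kb_zbi.
Qed.

Lemma dZE K f : dZ K f = mderivm (Kz K) f.
Proof.
rewrite /dZ foldr_iter mderivm_sq; apply/mderiv_perm/permP => a.
rewrite count_sq count_flatten sumnE !big_map -enumT big_enum /= big_split_ord /=.
rewrite [X in (_ = _ + X)%N]big1 ?addn0; last by move=> j _; rewrite Kz_zbi muln0.
by apply: eq_bigr => j _; rewrite count_nseq Kz_zi.
Qed.

Lemma dZbE K f : dZb K f = mderivm (Kb K) f.
Proof.
rewrite /dZb foldr_iter mderivm_sq; apply/mderiv_perm/permP => a.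
rewrite count_sq count_flatten sumnE !big_map -enumT big_enum /= big_split_ord /=.
rewrite [X in (_ = X + _)%N]big1 ?add0n; last by move=> j _; rewrite Kb_zi muln0.
by apply: eq_bigr => j _; rewrite count_nseq Kb_zbi.
Qed.

Definition LN (b : nat) : seq XN := [seq val K | K <- enum {: 'X_{1..n.+1 < b}}].

Lemma sum_LN b (F : XN -> P) :
  \sum_(K : 'X_{1..n.+1 < b}) F K = \sum_(K <- LN b) F K.
Proof. by rewrite /LN big_map big_enum; apply: eq_bigl. Qed.

Lemma memLN b K : (K \in LN b) = (mdeg K < b)%N.
Proof.
apply/mapP/idP => [[K' _ ->]|H]; first exact: bmdeg.
by exists (BMultinom H); rewrite ?mem_enum.
Qed.

Lemma uniqLN b : uniq (LN b).
Proof. by rewrite /LN map_inj_uniq ?enum_uniq //; exact: val_inj. Qed.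

Lemma sum_LN_trunc (F : XN -> P) B b :
  (forall K, (B <= mdeg K)%N -> F K = 0) -> (B <= b)%N ->
  \sum_(K <- LN b) F K = \sum_(K <- LN B) F K.
Proof.
move=> HF Bb.
rewrite (bigID (fun K => mdeg K < B)%N) /= [X in _ + X]big1 ?addr0; last first.
  by move=> K; rewrite -leqNgt; apply: HF.
rewrite -big_filter; apply: perm_big; apply: uniq_perm.
- by rewrite filter_uniq ?uniqLN.
- exact: uniqLN.
move=> K; rewrite mem_filter !memLN.
by case: ltnP => //= H; rewrite (leq_trans H Bb).
Qed.

Lemma sum_shift (F : XN -> P) (j : 'I_n.+1) b :
  (forall K : XN, K j = 0%N -> F K = 0) -> (forall K : XN, (b <= mdeg K)%N -> F K = 0) ->
  \sum_(K <- LN b) F K = \sum_(K <- LN b) F (K + U_(j))%MM.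
Proof.
move=> F0 Fb.
rewrite [RHS](bigID (fun K => (mdeg K).+1 < b)%N) /= [X in _ + X]big1 ?addr0; last first.
  by move=> K; rewrite -leqNgt => H; apply: Fb; rewrite mdegD mdeg1 addn1.
rewrite [LHS](bigID (fun K : XN => 0 < K j)%N) /= [X in _ + X]big1 ?addr0; last first.
  by move=> K; rewrite -leqNgt leqn0 => /eqP; apply: F0.
rewrite -[LHS]big_filter -[RHS]big_filter.
set L := [seq K <- LN b | ((mdeg K).+1 < b)%N].
have -> : \sum_(K <- L) F (K + U_(j))%MM = \sum_(K <- [seq (K + U_(j))%MM | K <- L]) F K.
  by rewrite big_map.
apply: perm_big; apply: uniq_perm.
- by rewrite filter_uniq ?uniqLN.
- by rewrite map_inj_uniq ?filter_uniq ?uniqLN //; exact: addIm.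
move=> K; rewrite mem_filter memLN; apply/idP/mapP.
- case/andP=> Kj Kb; exists (K - U_(j))%MM.
    have E : mdeg K = (mdeg (K - U_(j))%MM).+1.
      by rewrite -{1}(@submK _ U_(j) K) ?mdegD ?mdeg1 ?addn1 //; apply/mnm_lepP => i; rewrite mnm1E; case: eqP => // <-.
    by rewrite mem_filter memLN -E Kb (leq_trans (leqnSn _) Kb).
  by rewrite submK //; apply/mnm_lepP => i; rewrite mnm1E; case: eqP => // <-.
- case=> K' /[swap] ->; rewrite mem_filter memLN => /andP [H1 H2].
  by rewrite mnmDE mnm1E eqxx addn1 /= mdegD mdeg1 addn1.
Qed.

Definition cw (h : R) (K : XN) : C := (h ^+ mdeg K / (mfact K)%:R)%:C.
Definition Tw h f g (K : XN) : P := cw h K *: (dZb K f * dZ K g).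
Definition wickN h b f g : P := \sum_(K <- LN b) Tw h f g K.

Lemma wick_sum h f g : wick h f g = wickN h (msize f).+1 f g.
Proof. by rewrite /wick (sum_LN _ (Tw h f g)). Qed.

Lemma Bd0_mderivm m p : (msize p <= mdeg m)%N -> mderivm m p = 0.
Proof.
move=> H; apply: Bd0; have := @Bd_mderivm _ m p (@Bd_msize p).
by have /eqP -> : (msize p - mdeg m == 0)%N by rewrite subn_eq0.
Qed.

Lemma dZb_big K f : (msize f <= mdeg K)%N -> dZb K f = 0.
Proof. by move=> H; rewrite dZbE Bd0_mderivm // mdeg_Kb. Qed.

Lemma Tw0 h f g K : (msize f <= mdeg K)%N -> Tw h f g K = 0.
Proof. by move=> H; rewrite /Tw dZb_big // mul0r scaler0. Qed.

Lemma wickE h f g b : (msize f <= b)%N -> wick h f g = wickN h b f g.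
Proof.
move=> H; rewrite wick_sum /wickN (@sum_LN_trunc _ (msize f) b) //; last by move=> K; apply: Tw0.
by rewrite (@sum_LN_trunc _ (msize f) (msize f).+1) //; by move=> K; apply: Tw0.
Qed.

Lemma wickNDl h b p q g : wickN h b (p + q) g = wickN h b p g + wickN h b q g.
Proof.
rewrite /wickN -big_split; apply: eq_bigr => K _.
by rewrite /Tw !dZbE mderivmD mulrDl scalerDr.
Qed.
Lemma wickNZl h b c p g : wickN h b (c *: p) g = c *: wickN h b p g.
Proof.
rewrite /wickN scaler_sumr; apply: eq_bigr => K _.
by rewrite /Tw !dZbE mderivmZ -scalerAl !scalerA mulrC.
Qed.
Lemma wickNDr h b p q g : wickN h b g (p + q) = wickN h b g p + wickN h b g q.
Proof.
rewrite /wickN -big_split; apply: eq_bigr => K _.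
by rewrite /Tw !dZE mderivmD mulrDr scalerDr.
Qed.
Lemma wickNZr h b c p g : wickN h b g (c *: p) = c *: wickN h b g p.
Proof.
rewrite /wickN scaler_sumr; apply: eq_bigr => K _.
by rewrite /Tw !dZE mderivmZ -scalerAr !scalerA mulrC.
Qed.

Lemma wickDl h p q g : wick h (p + q) g = wick h p g + wick h q g.
Proof.
rewrite !(@wickE _ _ _ (msize (p + q) + msize p + msize q)) ?wickNDl //; lia.
Qed.
Lemma wickZl h c p g : wick h (c *: p) g = c *: wick h p g.
Proof.
rewrite !(@wickE _ _ _ (msize (c *: p) + msize p)) ?wickNZl //; lia.
Qed.
Lemma wickDr h p q g : wick h g (p + q) = wick h g p + wick h g q.
Proof. by rewrite !(@wickE _ _ _ (msize g)) ?wickNDr. Qed.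
Lemma wickZr h c p g : wick h g (c *: p) = c *: wick h g p.
Proof. by rewrite !(@wickE _ _ _ (msize g)) ?wickNZr. Qed.
Lemma wickNl h p g : wick h (- p) g = - wick h p g.
Proof. by rewrite -scaleN1r wickZl scaleN1r. Qed.
Lemma wickBl h p q g : wick h (p - q) g = wick h p g - wick h q g.
Proof. by rewrite wickDl wickNl. Qed.
Lemma wickNr h p g : wick h g (- p) = - wick h g p.
Proof. by rewrite -scaleN1r wickZr scaleN1r. Qed.
Lemma wickBr h p q g : wick h g (p - q) = wick h g p - wick h g q.
Proof. by rewrite wickDr wickNr. Qed.
Lemma wick0l h g : wick h 0 g = 0.
Proof. by have := wickZl h 0 0 g; rewrite !scale0r. Qed.

Lemma Kb0 : Kb 0%MM = 0%MM.
Proof. apply/mnmP => i; case: (idx_case i) => [[j ->]|[j ->]]; by rewrite ?Kb_zi ?Kb_zbi !mnm0E. Qed.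
Lemma Kz0 : Kz 0%MM = 0%MM.
Proof. apply/mnmP => i; case: (idx_case i) => [[j ->]|[j ->]]; by rewrite ?Kz_zi ?Kz_zbi !mnm0E. Qed.

Lemma wick1 h g : wick h 1 g = g.
Proof.
rewrite (@wickE _ _ _ 1) ?msize1 // /wickN (perm_big [:: 0%MM]); last first.
  apply: uniq_perm => //; first exact: uniqLN.
  by move=> K; rewrite memLN inE ltnS leqn0 mdeg_eq0.
rewrite big_seq1 /Tw dZbE dZE Kb0 Kz0 !mderivm0m mul1r /cw mdeg0 expr0.
have -> : mfact (0%MM : XN) = 1%N.
  by rewrite /mfact big1 // => i _; rewrite mnm0E.
by rewrite divr1 rmorph1 scale1r.
Qed.

Lemma wickXz h (j : 'I_n.+1) f g :
  wick h ('X_(zi j) * f) g = 'X_(zi j) * wick h f g.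
Proof.
rewrite !(@wickE _ _ _ (msize ('X_(zi j) * f) + msize f)); try lia.
rewrite /wickN mulr_sumr; apply: eq_bigr => K _.
by rewrite /Tw !dZbE LeibX Kb_zi scale0r addr0 -mulrA scalerAr.
Qed.

Lemma mdegB1 (m : 'X_{1..N}) i : (mdeg m <= (mdeg (m - U_(i))%MM).+1)%N.
Proof.
apply: (@leq_trans (mdeg ((m - U_(i)) + U_(i))%MM)); last by rewrite mdegD mdeg1 addn1.
rewrite !mdegE; apply: leq_sum => l _.
by rewrite mnmDE mnmBE addnC -leq_subLR.
Qed.

Lemma mfactS (K : XN) j : mfact (K + U_(j))%MM = (mfact K * (K j).+1)%N.
Proof.
rewrite /mfact (bigD1 j) //= [in RHS](bigD1 j) //= mnmDE mnm1E eqxx addn1 factS.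
rewrite (eq_bigr (fun i => (K i)`!)); last first.
  by move=> i nij; rewrite mnmDE mnm1E eq_sym (negbTE nij) addn0.
lia.
Qed.

Lemma cw_shift h (K : XN) j :
  cw h (K + U_(j))%MM * ((K j).+1)%:R = h%:C * cw h K.
Proof.
rewrite /cw -(rmorph_nat (real_complex R)) -!rmorphM; congr (_%:C).
rewrite mdegD mdeg1 addn1 exprS mfactS natrM.
have H1 : ((mfact K)%:R : R) != 0.
  by rewrite pnatr_eq0 -lt0n prodn_gt0 // => i; rewrite fact_gt0.
have H2 : (((K j).+1)%:R : R) != 0 by rewrite pnatr_eq0.
by field; rewrite H1 /= addrC natr1.
Qed.

Lemma wickXzb h (j : 'I_n.+1) f g :
  wick h ('X_(zbi j) * f) g = 'X_(zbi j) * wick h f g + h%:C *: wick h f (D (zi j) g).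
Proof.
set b := (msize ('X_(zbi j) * f) + (msize f).+1)%N.
rewrite !(@wickE _ _ _ b); try lia.
rewrite /wickN mulr_sumr.
pose F (K : XN) := cw h K *: (((K j)%:R *: mderivm (Kb K - U_(zbi j))%MM f) * dZ K g).
have E : forall K, Tw h ('X_(zbi j) * f) g K = 'X_(zbi j) * Tw h f g K + F K.
  by move=> K; rewrite /Tw /F !dZbE LeibX Kb_zbi mulrDl scalerDr -mulrA scalerAr.
rewrite (eq_bigr _ (fun K _ => E K)) big_split /=; congr (_ + _).
have Fb : forall K : XN, (b <= mdeg K)%N -> F K = 0.
  move=> K HK; rewrite /F Bd0_mderivm ?scaler0 ?mul0r ?scaler0 //.
  have := mdegB1 (Kb K) (zbi j); rewrite mdeg_Kb; lia.
have F0 : forall K : XN, K j = 0%N -> F K = 0.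
  by move=> K HK; rewrite /F HK scale0r mul0r scaler0.
rewrite (sum_shift F0 Fb).
rewrite scaler_sumr; apply: eq_bigr => K _.
rewrite /F /Tw mnmDE mnm1E eqxx addn1 KbD KbU addmK !dZE KzD KzU mderivmM.
by rewrite -scalerAl !scalerA cw_shift dZbE.
Qed.

Lemma wickD h i f g : D i (wick h f g) = wick h (D i f) g + wick h f (D i g).
Proof.
rewrite !(@wickE _ _ _ (msize f + msize (D i f))); try lia.
rewrite /wickN raddf_sum -big_split; apply: eq_bigr => K _.
by rewrite /Tw /= (mderivZ i (cw h K)) mderivM !dZbE !dZE !mderivm_D scalerDr.
Qed.

Local Notation L := (@Lap R n).

Lemma LapD p q : L (p + q) = L p + L q.
Proof. by rewrite /Lap -big_split; apply: eq_bigr => j _; rewrite !mderivD. Qed.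
Lemma LapZ (c : C) p : L (c *: p) = c *: L p.
Proof.
rewrite /Lap scaler_sumr; apply: eq_bigr => j _.
by rewrite (mderivZ (zbi j) c p) (mderivZ (zi j) c).
Qed.
Lemma Lap0 : L 0 = 0.
Proof. by have := LapZ 0 0; rewrite !scale0r. Qed.
Lemma Lap1 : L 1 = 0.
Proof. by rewrite /Lap big1 // => j _; rewrite D1 mderiv0. Qed.
Lemma Lap_D i p : L (D i p) = D i (L p).
Proof.
rewrite /Lap raddf_sum; apply: eq_bigr => j _ /=.
by rewrite [D (zbi j) (D i p)]mderiv_comm [D (zi j) (D i _)]mderiv_comm.
Qed.

Lemma Lap_X a p : L ('X_a * p) = 'X_a * L p + D (sw a) p.
Proof.
rewrite /Lap mulr_sumr.
rewrite (eq_bigr (fun j => 'X_a * D (zi j) (D (zbi j) p) +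
   ((a == zi j)%:R *: D (zbi j) p + (a == zbi j)%:R *: D (zi j) p))); last first.
  move=> j _; rewrite !DXM mderivD DXM.
  by rewrite (mderivZ (zi j) ((a == zbi j)%:R) p) addrA.
rewrite big_split /=; congr (_ + _).
case: (idx_case a) => [[k ->]|[k ->]]; rewrite ?sw_zi ?sw_zbi.
- rewrite (bigD1 k) //= eqxx zi_zbi scale0r addr0 scale1r big1 ?addr0 //.
  by move=> j njk; rewrite (inj_eq zi_inj) [k == j]eq_sym (negbTE njk) zi_zbi !scale0r addr0.
- rewrite (bigD1 k) //= eqxx eq_sym zi_zbi scale0r add0r scale1r big1 ?addr0 //.
  by move=> j njk; rewrite (inj_eq zbi_inj) [k == j]eq_sym (negbTE njk) eq_sym zi_zbi !scale0r addr0.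
Qed.

Lemma cc_sum (I : Type) (r : seq I) (F : I -> P) :
  cc (\sum_(i <- r) F i) = \sum_(i <- r) cc (F i).
Proof. by rewrite /cc /comp_conj raddf_sum. Qed.

Lemma cc_Lap p : cc (L p) = L (cc p).
Proof.
rewrite /Lap cc_sum; apply: eq_bigr => j _.
by rewrite !cc_D sw_zi sw_zbi mderiv_comm.
Qed.

Lemma iterLD k p q : iter k L (p + q) = iter k L p + iter k L q.
Proof. by elim: k => //= k ->; rewrite LapD. Qed.
Lemma iterLZ k c p : iter k L (c *: p) = c *: iter k L p.
Proof. by elim: k => //= k ->; rewrite LapZ. Qed.
Lemma iterL_D k i p : iter k L (D i p) = D i (iter k L p).
Proof. by elim: k => //= k ->; rewrite Lap_D. Qed.
Lemma iterL_cc k p : cc (iter k L p) = iter k L (cc p).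
Proof. by elim: k => //= k <-; rewrite cc_Lap. Qed.

Lemma iterL_X k a p : iter k.+1 L ('X_a * p) =
  'X_a * iter k.+1 L p + k.+1%:R *: D (sw a) (iter k L p).
Proof.
elim: k => [|k IH]; first by rewrite /= Lap_X scale1r.
rewrite [LHS]iterS IH LapD Lap_X LapZ -Lap_D -addrA; congr (_ + _).
by rewrite !scaler_nat [in RHS]mulrS.
Qed.

Lemma Bd_Lap k p : Bd k p -> Bd k.-1.-1 (L p).
Proof.
move=> H m Hm; rewrite /Lap raddf_sum /= big1 // => j _.
exact: (Bd_D _ (Bd_D _ H)).
Qed.

Lemma iterL_big k p : (msize p <= k)%N -> iter k L p = 0.
Proof.
move=> H; apply: Bd0.
suff S : forall i, Bd (msize p - i) (iter i L p).
  by have := S k; have /eqP -> : (msize p - k == 0)%N by rewrite subn_eq0.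
elim=> [|i IH]; first by rewrite subn0; exact: Bd_msize.
apply: Bd_le (Bd_Lap IH); by rewrite subnS leq_pred.
Qed.

Definition ck (h : R) (k : nat) : C := ((- h) ^+ k / (k`!)%:R)%:C.
Definition ELN h b p : P := \sum_(k < b) ck h k *: iter k L p.

Lemma ELN_trunc h b p : (msize p <= b)%N -> ELN h b p = ELN h (msize p) p.
Proof.
move=> H; rewrite /ELN -(subnKC H) big_split_ord /= [X in _ + X]big1 ?addr0 //.
by move=> i _; rewrite iterL_big ?scaler0 // leq_addr.
Qed.

Lemma ELE h b p : (msize p <= b)%N -> expLap h p = ELN h b p.
Proof.
move=> H; rewrite (ELN_trunc _ H) -(@ELN_trunc h (msize p).+1) //.
Qed.

Lemma ELND h b p q : ELN h b (p + q) = ELN h b p + ELN h b q.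
Proof. by rewrite /ELN -big_split; apply: eq_bigr => k _; rewrite iterLD scalerDr. Qed.
Lemma ELNZ h b c p : ELN h b (c *: p) = c *: ELN h b p.
Proof.
rewrite /ELN scaler_sumr; apply: eq_bigr => k _.
by rewrite iterLZ !scalerA mulrC.
Qed.

Lemma ELD h p q : expLap h (p + q) = expLap h p + expLap h q.
Proof. by rewrite !(@ELE h (msize (p + q) + msize p + msize q)) ?ELND //; lia. Qed.
Lemma ELZ h c p : expLap h (c *: p) = c *: expLap h p.
Proof. by rewrite !(@ELE h (msize (c *: p) + msize p)) ?ELNZ //; lia. Qed.
Lemma EL0 h : expLap h (0 : P) = 0.
Proof. by have := ELZ h 0 (0 : P); rewrite !scale0r. Qed.
Lemma ELB h p q : expLap h (p - q) = expLap h p - expLap h q.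
Proof. by rewrite ELD -scaleN1r ELZ scaleN1r. Qed.

Lemma EL1 h : expLap h (1 : P) = 1.
Proof.
rewrite (@ELE h 1) ?msize1 // /ELN big_ord1 /= /ck expr0 fact0 divr1.
by rewrite rmorph1 scale1r.
Qed.

Lemma EL_D h i p : expLap h (D i p) = D i (expLap h p).
Proof.
rewrite !(@ELE h (msize p + msize (D i p))); try lia.
rewrite /ELN raddf_sum; apply: eq_bigr => k _ /=.
by rewrite iterL_D (mderivZ i (ck h k)).
Qed.

Lemma ck_shift h k : ck h k.+1 * (k.+1)%:R = - h%:C * ck h k.
Proof.
rewrite /ck -(rmorph_nat (real_complex R)) -rmorphN -!rmorphM; congr (_%:C).
rewrite exprS factS natrM.
have H1 : ((k`!)%:R : R) != 0 by rewrite pnatr_eq0 -lt0n fact_gt0.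
have H2 : (((k).+1)%:R : R) != 0 by rewrite pnatr_eq0.
by field; rewrite H1 /= addrC natr1.
Qed.

Lemma ELN_S h b q : ELN h b.+1 q = ck h 0 *: q + \sum_(k < b) ck h k.+1 *: iter k.+1 L q.
Proof. by rewrite /ELN big_ord_recl /=; congr (_ + _); apply: eq_bigr => i _; rewrite /bump leq0n add1n. Qed.

Lemma EL_X h a p : expLap h ('X_a * p) =
  'X_a * expLap h p - h%:C *: D (sw a) (expLap h p).
Proof.
set b := (msize ('X_a * p) + msize p)%N.
have E1 : expLap h ('X_a * p) = ELN h b.+1 ('X_a * p) by apply: ELE; lia.
have E2 : expLap h p = ELN h b.+1 p by apply: ELE; lia.
have E3 : expLap h p = ELN h b p by apply: ELE; lia.
rewrite E1 {1}E2 E3 !ELN_S.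
have S1 : \sum_(k < b) ck h k.+1 *: iter k.+1 L ('X_a * p) =
   'X_a * (\sum_(k < b) ck h k.+1 *: iter k.+1 L p) +
   \sum_(k < b) (- h%:C * ck h k) *: D (sw a) (iter k L p).
  rewrite mulr_sumr -big_split; apply: eq_bigr => k _.
  by rewrite iterL_X scalerDr scalerAr scalerA ck_shift.
rewrite mulrDr scalerAr -!addrA; congr (_ + _); apply: (etrans S1); congr (_ + _).
rewrite /ELN (D_sum (sw a)) scaler_sumr -sumrN; apply: eq_bigr => k _.
by rewrite (mderivZ (sw a) (ck h k)) scalerA mulNr scaleNr.
Qed.

Lemma ThE h f : Theta h f = cc (expLap h f).
Proof. by []. Qed.

Lemma ThD h p q : Theta h (p + q) = Theta h p + Theta h q.
Proof. by rewrite !ThE ELD ccD. Qed.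
Lemma ThZ h c p : Theta h (c *: p) = c *: Theta h p.
Proof. by rewrite !ThE ELZ ccZ. Qed.
Lemma ThB h p q : Theta h (p - q) = Theta h p - Theta h q.
Proof. by rewrite !ThE ELB ccB. Qed.
Lemma Th0 h : Theta h (0 : P) = 0.
Proof. by rewrite ThE EL0 cc0. Qed.
Lemma Th1 h : Theta h (1 : P) = 1.
Proof. by rewrite ThE EL1 cc1. Qed.

Lemma Th_X h a p : Theta h ('X_a * p) =
  'X_(sw a) * Theta h p - h%:C *: D a (Theta h p).
Proof. by rewrite !ThE EL_X ccB ccM ccX ccZ cc_D swK. Qed.

Lemma Th_D h i p : Theta h (D i p) = D (sw i) (Theta h p).
Proof. by rewrite !ThE EL_D cc_D. Qed.

Lemma EE h p : expLap (- h) (expLap h p) = p.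
Proof.
elim/poly_ind: p => [|||c p Hp|a p Hp].
- by rewrite !EL0.
- by rewrite !EL1.
- by move=> p q Hp Hq; rewrite !ELD; congr (_ + _).
- by rewrite !ELZ Hp.
rewrite EL_X ELB ELZ EL_X EL_D Hp rmorphN scaleNr opprK.
exact: addrK.
Qed.

Lemma Theta_bij h : bijective (@Theta R n h).
Proof.
exists (fun q => expLap (- h) (cc q)) => f.
  by rewrite ThE ccK EE.
by rewrite ThE -{1}(opprK h) EE ccK.
Qed.

Definition mc (p : P) : P := map_mpoly conjc p.

Lemma mcD p q : mc (p + q) = mc p + mc q.
Proof. exact: raddfD. Qed.
Lemma mcZ c p : mc (c *: p) = c^* *: mc p.
Proof. exact: map_mpolyZ. Qed.
Lemma mcM p q : mc (p * q) = mc p * mc q.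
Proof. by rewrite /mc rmorphM. Qed.
Lemma mcX i : mc 'X_i = 'X_i.
Proof. exact: map_mpolyX. Qed.
Lemma mc_D i p : mc (D i p) = D i (mc p).
Proof.
apply/mpolyP => m.
rewrite /mc !mcoeff_map_mpoly !mcoeff_deriv mcoeff_map_mpoly; exact: raddfMn.
Qed.

Lemma cPE f : conjP f = mc (cc f).
Proof. by []. Qed.
Lemma cPD p q : conjP (p + q) = conjP p + conjP q.
Proof. by rewrite !cPE ccD mcD. Qed.
Lemma cPZ c p : conjP (c *: p) = c^* *: conjP p.
Proof. by rewrite !cPE ccZ mcZ. Qed.
Lemma cPZr (r : R) p : conjP (r%:C *: p) = r%:C *: conjP p.
Proof. rewrite cPZ; congr (_ *: _); exact: conjc_real. Qed.
Lemma cPB p q : conjP (p - q) = conjP p - conjP q.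
Proof. by rewrite -scaleN1r cPD cPZ rmorphN1 scaleN1r. Qed.
Lemma cP0 : conjP (0 : P) = 0.
Proof. by rewrite cPE cc0 /mc raddf0. Qed.
Lemma cP1 : conjP (1 : P) = 1.
Proof. by rewrite cPE cc1 /mc rmorph1. Qed.
Lemma cP_X a p : conjP ('X_a * p) = 'X_(sw a) * conjP p.
Proof. by rewrite !cPE ccM ccX mcM mcX. Qed.
Lemma cP_D i p : conjP (D i p) = D (sw i) (conjP p).
Proof. by rewrite !cPE cc_D mc_D. Qed.

Lemma Theta_conj h f : Theta h (conjP f) = conjP (Theta h f).
Proof.
elim/poly_ind: f => [|||c p Hp|a p Hp].
- by rewrite cP0 Th0 cP0.
- by rewrite cP1 Th1 cP1.
- move=> p q Hp Hq.
  rewrite (cPD p q) (ThD h (conjP p) (conjP q)) (ThD h p q).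
  by rewrite (cPD (Theta h p) (Theta h q)); exact: (f_equal2 +%R Hp Hq).
- by rewrite (cPZ c p) (ThZ h (c^*) (conjP p)) (ThZ h c p) (cPZ c (Theta h p)); exact: (f_equal (fun x => c^* *: x) Hp).
rewrite (cP_X a p) (Th_X h (sw a) (conjP p)) swK (Th_X h a p).
rewrite cPB (cP_X (sw a) (Theta h p)) swK cPZr cP_D.
exact: (f_equal (fun x => 'X_a * x - h%:C *: D (sw a) x) Hp).
Qed.

Lemma alg1 (x a b : P) (k : C) : x - k *: (a + b) = x + (- k) *: b - k *: a.
Proof. by rewrite scalerDr scaleNr opprD addrA addrAC. Qed.
Lemma alg2 (x a b : P) (k : C) : x - k *: (a + b) + k *: b = x - k *: a.
Proof. by rewrite scalerDr opprD addrA addrNK. Qed.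

Lemma Theta_wick h f g :
  Theta h (wick h f g) = wick (- h) (Theta h f) (Theta h g).
Proof.
elim/poly_ind: f g => [g|g|p q Hp Hq g|c p Hp g|a p Hp g].
- by rewrite wick0l Th0 wick0l.
- by rewrite wick1 Th1 wick1.
- rewrite (wickDl h p q g) (ThD h (wick h p g) (wick h q g)) (ThD h p q).
  by rewrite (wickDl (- h) (Theta h p) (Theta h q)); exact: (f_equal2 +%R (Hp g) (Hq g)).
- rewrite (wickZl h c p g) (ThZ h c (wick h p g)) (ThZ h c p).
  by rewrite (wickZl (- h) c (Theta h p)); exact: (f_equal (fun x => c *: x) (Hp g)).
case: (idx_case a) => [[j ->]|[j ->]].
- rewrite (Th_X h (zi j) p) sw_zi (wickBl (- h)) (wickZl (- h)) (wickXzb (- h)).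
  rewrite (wickXz h j p g) (Th_X h (zi j) (wick h p g)) sw_zi (Hp g) wickD rmorphN.
  exact: alg1.
- rewrite (Th_X h (zbi j) p) sw_zbi (wickBl (- h)) (wickZl (- h)) (wickXz (- h)).
  rewrite (wickXzb h j p g) (ThD h) (ThZ h) (Th_X h (zbi j) (wick h p g)) sw_zbi.
  rewrite (Hp g) (Hp (D (zi j) g)) (Th_D h (zi j) g) sw_zi wickD.
  exact: alg2.
Qed.

End Proofs.

Unset Implicit Arguments.
Set Strict Implicit.

Theorem lemma6p3 (R : rcfType) (n : nat) (h : R) (hpos : 0 < h) :
  (forall (a : R[i]) (f g : Cpoly R n),
      Theta h (a *: f + g) = a *: Theta h f + Theta h g)
  /\ bijective (@Theta R n h)
  /\ (forall f g : Cpoly R n,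
        Theta h (wick h f g) = wick (- h) (Theta h f) (Theta h g))
  /\ (forall f : Cpoly R n, Theta h (conjP f) = conjP (Theta h f)).
Proof.
split; [|split; [|split]].
- by move=> a f g; rewrite ThD ThZ.
- exact: Theta_bij.
- move=> f g; exact: Theta_wick.
- move=> f; exact: Theta_conj.
Qed.
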